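(* Let $\varepsilon$ be an integer with $\varepsilon\equiv 2\pmod{4}$. Then there exist infinitely many positive odd integers $n$ with the property that there exist positive integers $d_1, d_2$, each dividing $\frac{n^2+1}{2}$, such that $d_1+d_2=4n+\varepsilon$. *)

(* Defs.v *)
From Stdlib Require Import ZArith.
Open Scope Z_scope.

Definition good (eps n : Z) : Prop :=
  exists d1 d2 : Z, 0 < d1 /\ 0 < d2 /\
    (d1 | (n ^ 2 + 1) / 2) /\ (d2 | (n ^ 2 + 1) / 2) /\
    d1 + d2 = 4 * n + eps.

(* Main.v *)
Require Import Defs.
From Stdlib Require Import ZArith Reals Lra Lia Psatz Znumtheory IndefiniteDescription.
Open Scope Z_scope.

Lemma pigeon : forall (T : nat) (f : nat -> Z),
  (forall j, (j <= T)%nat -> 0 <= f j < Z.of_nat T) ->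
  exists i j, (i < j <= T)%nat /\ f i = f j.
Proof.
  induction T as [|T IH]; intros f Hf.
  - specialize (Hf 0%nat (le_n 0)). simpl in Hf. lia.
  - destruct (Classical_Prop.classic (exists i, (i <= T)%nat /\ f i = f (S T))) as [[i [Hi Hfi]]|Hno].
    + exists i, (S T). split; [lia|exact Hfi].
    + set (v := f (S T)).
      set (g := fun j => if Z.eq_dec (f j) (Z.of_nat T) then v else f j).
      assert (Hv : 0 <= v < Z.of_nat (S T)) by (apply Hf; lia).
      assert (Hne : forall j, (j <= T)%nat -> f j <> v).
      { intros j Hj E. apply Hno. exists j. split; auto. }
      destruct (IH g) as [i [j [Hij Hg]]].
      { intros j Hj. unfold g. pose proof (Hf j ltac:(lia)) as Hr.
        pose proof (Hne j Hj).
        destruct (Z.eq_dec (f j) (Z.of_nat T)) as [E|E].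
        - destruct (Z.eq_dec v (Z.of_nat T)); [lia|]. rewrite Nat2Z.inj_succ in Hv. lia.
        - rewrite Nat2Z.inj_succ in Hr. lia. }
      exists i, j. split; [lia|].
      unfold g in Hg.
      pose proof (Hne i ltac:(lia)). pose proof (Hne j ltac:(lia)).
      destruct (Z.eq_dec (f i) (Z.of_nat T)); destruct (Z.eq_dec (f j) (Z.of_nat T)); lia.
Qed.

Definition fl (r : R) : Z := (up r - 1)%Z.

Lemma fl_spec r : (IZR (fl r) <= r < IZR (fl r) + 1)%R.
Proof.
  unfold fl. destruct (archimed r) as [H1 H2]. rewrite minus_IZR. simpl. lra.
Qed.

Lemma dirichlet (D B : Z) (HB : 1 <= B) :
  exists x y, 1 <= y <= B /\
    (- / IZR B < IZR x - IZR y * sqrt (IZR D) < / IZR B)%R.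
Proof.
  set (s := sqrt (IZR D)).
  set (phi := fun j : nat => (IZR (Z.of_nat j) * s - IZR (fl (IZR (Z.of_nat j) * s)))%R).
  set (f := fun j => fl (IZR B * phi j)).
  assert (HBr : (1 <= IZR B)%R) by (apply IZR_le; lia).
  assert (Hphi : forall j, (0 <= phi j < 1)%R).
  { intro j. unfold phi. pose proof (fl_spec (IZR (Z.of_nat j) * s)). lra. }
  assert (Hf : forall j, (j <= Z.to_nat B)%nat -> 0 <= f j < Z.of_nat (Z.to_nat B)).
  { intros j _. rewrite Z2Nat.id by lia. unfold f.
    pose proof (fl_spec (IZR B * phi j)). pose proof (Hphi j).
    assert (0 <= IZR B * phi j)%R by nra.
    assert (IZR B * phi j < IZR B)%R by nra.
    split.
    - assert (-1 < fl (IZR B * phi j)); [apply lt_IZR; lra| lia].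
    - apply lt_IZR. lra. }
  destruct (pigeon _ _ Hf) as [i [j [Hij Heq]]].
  exists (fl (IZR (Z.of_nat j) * s) - fl (IZR (Z.of_nat i) * s)), (Z.of_nat j - Z.of_nat i).
  split; [lia|].
  rewrite !minus_IZR.
  unfold f in Heq.
  pose proof (fl_spec (IZR B * phi i)) as Fi.
  pose proof (fl_spec (IZR B * phi j)) as Fj.
  rewrite Heq in Fi.
  assert (Hd : (-1 < IZR B * (phi i - phi j) < 1)%R) by lra.
  assert (E : (IZR (fl (IZR (Z.of_nat j) * s)) - IZR (fl (IZR (Z.of_nat i) * s)) -
     (IZR (Z.of_nat j) - IZR (Z.of_nat i)) * s = phi i - phi j)%R) by (unfold phi; ring).
  rewrite E.
  assert (HBi : (IZR B * / IZR B = 1)%R) by (apply Rinv_r; lra).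
  assert (0 < / IZR B)%R by (apply Rinv_0_lt_compat; lra).
  set (z := (phi i - phi j)%R) in *.
  split; nra.
Qed.

Definition NS (D : Z) := forall x y, y <> 0 -> x * x <> D * (y * y).

Lemma good_pair (D : Z) (HD : 1 <= D) (Hns : NS D) (Y0 : Z) (HY : 0 <= Y0) :
  exists x y, Y0 < y /\ 1 <= Z.abs (x * x - D * (y * y)) <= D + 1.
Proof.
  set (B := (Y0 + 1) * (D + 1) + 1).
  destruct (dirichlet D B ltac:(unfold B; nia)) as [x [y [Hy Hr]]].
  exists x, y.
  set (s := sqrt (IZR D)) in *.
  set (N := x * x - D * (y * y)).
  assert (Hs0 : (0 <= s)%R) by apply sqrt_pos.
  assert (Hss : (s * s = IZR D)%R) by (apply sqrt_sqrt; apply IZR_le; lia).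
  set (r := (IZR x - IZR y * s)%R) in *.
  assert (HN : IZR N = (r * (r + 2 * IZR y * s))%R).
  { unfold N, r. rewrite minus_IZR, !mult_IZR. rewrite <- Hss. ring. }
  assert (HN0 : N <> 0) by (unfold N; intro E; apply (Hns x y); lia).
  assert (HBr : (IZR B = (IZR Y0 + 1) * (IZR D + 1) + 1)%R).
  { unfold B. rewrite plus_IZR, mult_IZR, !plus_IZR. reflexivity. }
  assert (HY0 : (0 <= IZR Y0)%R) by (apply IZR_le; lia).
  assert (HD1 : (1 <= IZR D)%R) by (apply IZR_le; lia).
  assert (Hyr : (1 <= IZR y <= IZR B)%R) by (split; apply IZR_le; lia).
  assert (HBpos : (1 <= IZR B)%R) by lra.
  set (a := (/ IZR B)%R) in *.
  assert (Ha : (IZR B * a = 1)%R) by (apply Rinv_r; lra).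
  assert (Ha0 : (0 < a)%R) by (apply Rinv_0_lt_compat; lra).
  assert (Ha1 : (a <= 1)%R) by nra.
  assert (H2s : (2 * s <= IZR D + 1)%R) by nra.
  assert (Hys : (IZR y * s * a <= s)%R).
  { assert (IZR y * a <= 1)%R by nra. nra. }
  assert (Hr2 : (r * r < 1)%R) by nra.
  assert (Hbnd : (- (IZR D + 2) < IZR N < IZR D + 2)%R).
  { assert (Hysp : (0 <= IZR y * s)%R) by nra.
    assert (Hyr1 : (IZR y * s * r <= IZR y * s * a)%R) by (apply Rmult_le_compat_l; lra).
    assert (Hyr2 : (- (IZR y * s * a) <= IZR y * s * r)%R).
    { assert (IZR y * s * (-a) <= IZR y * s * r)%R by (apply Rmult_le_compat_l; lra). lra. }
    assert (0 <= r * r)%R by nra.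
    rewrite HN. split; nra. }
  assert (Hb1 : - (D + 2) < N < D + 2).
  { split; apply lt_IZR; rewrite ?opp_IZR, ?plus_IZR; simpl; lra. }
  split.
  -
    assert (HN1 : (1 <= IZR N \/ IZR N <= -1)%R).
    { destruct (Z_lt_le_dec 0 N).
      - left. apply IZR_le. lia.
      - right. replace (-1)%R with (IZR (-1)) by reflexivity. apply IZR_le. lia. }
    assert (Hbig : (IZR B < 1 + 2 * IZR y * s)%R).
    { destruct HN1 as [H|H]; rewrite HN in H.
      - assert (r * (r + 2 * IZR y * s) * IZR B < 1 + 2 * IZR y * s)%R.
        { assert (r * IZR B < 1)%R by nra. assert (r*r*IZR B < 1)%R by nra.
          assert (Hysp : (0 <= 2 * IZR y * s)%R) by nra.
          assert (2 * IZR y * s * (r * IZR B) <= 2 * IZR y * s * 1)%R by (apply Rmult_le_compat_l; lra).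
          replace (r * (r + 2 * IZR y * s) * IZR B)%R with (r*r*IZR B + 2 * IZR y * s * (r * IZR B))%R by ring.
          lra. }
        nra.
      - assert (- (r * (r + 2 * IZR y * s)) * IZR B < 1 + 2 * IZR y * s)%R.
        { assert (- r * IZR B < 1)%R by nra. assert (r*r*IZR B < 1)%R by nra.
          assert (Hysp : (0 <= 2 * IZR y * s)%R) by nra.
          assert (2 * IZR y * s * (- r * IZR B) <= 2 * IZR y * s * 1)%R by (apply Rmult_le_compat_l; lra).
          assert (0 <= r*r*IZR B)%R by nra.
          replace (- (r * (r + 2 * IZR y * s)) * IZR B)%R with (- (r*r*IZR B) + 2 * IZR y * s * (- r * IZR B))%R by ring.
          lra. }
        nra. }
    assert ((IZR Y0 + 1) * (IZR D + 1) < IZR y * (IZR D + 1))%R by nra.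
    assert (IZR Y0 + 1 < IZR y)%R by nra.
    assert (Y0 + 1 < y) by (apply lt_IZR; rewrite plus_IZR; exact H0).
    lia.
  - lia.
Qed.

Lemma decode a1 b1 a2 b2 M : 0 <= b1 < M -> 0 <= b2 < M ->
  a1 * M + b1 = a2 * M + b2 -> a1 = a2 /\ b1 = b2.
Proof.
  intros H1 H2 E.
  assert (a1 = a2).
  { destruct (Z.lt_total a1 a2) as [L|[L|L]]; auto.
    - assert (a1 * M + M <= a2 * M) by nia. lia.
    - assert (a2 * M + M <= a1 * M) by nia. lia. }
  subst. lia.
Qed.

Lemma pell (D L : Z) (HD : 1 <= D) (HL : 1 <= L) (Hns : NS D) :
  exists P Q, P * P - D * (Q * Q) = 1 /\ 2 <= P /\ 1 <= Q /\ (L | P - 1) /\ (L | Q).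
Proof.
  assert (Hex : forall Y0 : Z, exists p : Z * Z, Z.abs Y0 < snd p /\
     1 <= Z.abs (fst p * fst p - D * (snd p * snd p)) <= D + 1).
  { intro Y0. destruct (good_pair D HD Hns (Z.abs Y0) ltac:(lia)) as [x [y H]].
    exists (x, y). exact H. }
  set (F := fun Y0 => proj1_sig (constructive_indefinite_description _ (Hex Y0))).
  assert (HF : forall Y0, Z.abs Y0 < snd (F Y0) /\
     1 <= Z.abs (fst (F Y0) * fst (F Y0) - D * (snd (F Y0) * snd (F Y0))) <= D + 1).
  { intro Y0. unfold F. apply proj2_sig. }
  set (sq := fix sq (k : nat) : Z * Z := match k with O => F 0 | S k' => F (snd (sq k')) end).
  assert (Hsq0 : forall k, 0 < snd (sq k)).
  { intro k. destruct k as [|k]; simpl.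
    - pose proof (HF 0); lia.
    - pose proof (HF (snd (sq k))); lia. }
  assert (Hsq1 : forall k, snd (sq k) < snd (sq (S k))).
  { intro k. simpl. pose proof (HF (snd (sq k))). lia. }
  assert (Hmono : forall i j, (i < j)%nat -> snd (sq i) < snd (sq j)).
  { intros i j Hij. induction Hij.
    - apply Hsq1.
    - pose proof (Hsq1 m). lia. }
  assert (Hnorm : forall k, 1 <= Z.abs (fst (sq k) * fst (sq k) - D * (snd (sq k) * snd (sq k))) <= D + 1).
  { intro k. destruct k; simpl; apply HF. }
  set (C := D + 1).
  set (Mx := C * L).
  set (nrm := fun p : Z * Z => fst p * fst p - D * (snd p * snd p)).
  set (cls := fun p : Z * Z =>
      ((nrm p + C) * Mx + (fst p mod (Z.abs (nrm p) * L))) * Mx + (snd p mod (Z.abs (nrm p) * L))).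
  set (T := (2 * C + 1) * Mx * Mx).
  assert (Hcls : forall j, (j <= Z.to_nat T)%nat -> 0 <= cls (sq j) < Z.of_nat (Z.to_nat T)).
  { intros j _. rewrite Z2Nat.id by (unfold T, Mx, C; nia).
    pose proof (Hnorm j) as Hn. fold (nrm (sq j)) in Hn.
    set (m := Z.abs (nrm (sq j)) * L).
    assert (Hm1 : L <= m <= Mx) by (unfold m, Mx, C; nia).
    pose proof (Z.mod_pos_bound (fst (sq j)) m ltac:(lia)).
    pose proof (Z.mod_pos_bound (snd (sq j)) m ltac:(lia)).
    unfold cls, T. fold m.
    assert (- C <= nrm (sq j) <= C) by (unfold C; lia).
    split; nia. }
  destruct (pigeon _ _ Hcls) as [i [j [Hij Hc]]].
  set (x1 := fst (sq i)). set (y1 := snd (sq i)). set (x2 := fst (sq j)). set (y2 := snd (sq j)).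
  pose proof (Hnorm i) as Hni. pose proof (Hnorm j) as Hnj.
  fold (nrm (sq i)) in Hni. fold (nrm (sq j)) in Hnj.
  pose proof (Hmono i j ltac:(lia)) as Hy12. pose proof (Hsq0 i) as Hy1.
  fold y1 y2 in Hy12, Hy1.
  unfold cls in Hc.
  set (mi := Z.abs (nrm (sq i)) * L) in Hc.
  set (mj := Z.abs (nrm (sq j)) * L) in Hc.
  assert (Hmi : L <= mi <= Mx) by (unfold mi, Mx, C; nia).
  assert (Hmj : L <= mj <= Mx) by (unfold mj, Mx, C; nia).
  pose proof (Z.mod_pos_bound (fst (sq i)) mi ltac:(lia)).
  pose proof (Z.mod_pos_bound (snd (sq i)) mi ltac:(lia)).
  pose proof (Z.mod_pos_bound (fst (sq j)) mj ltac:(lia)).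
  pose proof (Z.mod_pos_bound (snd (sq j)) mj ltac:(lia)).
  apply decode in Hc; [|lia|lia]. destruct Hc as [Hc Hyy].
  apply decode in Hc; [|lia|lia]. destruct Hc as [HN Hxx].
  assert (HNeq : nrm (sq i) = nrm (sq j)) by lia.
  set (N := nrm (sq i)) in *.
  assert (Hmij : mi = mj) by (unfold mi, mj; rewrite HNeq; reflexivity).
  rewrite <- Hmij in Hxx, Hyy.
  set (m := mi) in *.
  assert (Hxd : x2 = x1 + m * (x2 / m - x1 / m)).
  { pose proof (Z.div_mod x1 m ltac:(lia)). pose proof (Z.div_mod x2 m ltac:(lia)).
    unfold x1, x2 in *. lia. }
  assert (Hyd : y2 = y1 + m * (y2 / m - y1 / m)).
  { pose proof (Z.div_mod y1 m ltac:(lia)). pose proof (Z.div_mod y2 m ltac:(lia)).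
    unfold y1, y2 in *. lia. }
  set (a := x2 / m - x1 / m) in Hxd. set (b := y2 / m - y1 / m) in Hyd.
  assert (HN1 : x1 * x1 - D * (y1 * y1) = N) by reflexivity.
  assert (HN2 : x2 * x2 - D * (y2 * y2) = N) by (rewrite HNeq; reflexivity).
  assert (HN0 : N <> 0) by lia.
  assert (Hsig : exists sg, sg * sg = 1 /\ Z.abs N = sg * N).
  { destruct (Z_lt_le_dec 0 N).
    - exists 1. split; [lia|]. rewrite Z.abs_eq; lia.
    - exists (-1). split; [lia|]. rewrite Z.abs_neq; lia. }
  destruct Hsig as [sg [Hsg HsgN]].
  assert (Hm : m = sg * N * L) by (unfold m, mi; try fold N; rewrite HsgN; ring).
  clearbody x1 x2 y1 y2 a b m N.
  subst x2 y2.
  set (X := 1 + sg * L * (x1 * a - D * y1 * b)).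
  set (Y := sg * L * (y1 * a - x1 * b)).
  assert (HNX : N * X = x1 * (x1 + m * a) - D * (y1 * (y1 + m * b))).
  { unfold X. rewrite Hm. rewrite <- HN1. ring. }
  assert (HNY : N * Y = y1 * (x1 + m * a) - x1 * (y1 + m * b)).
  { unfold Y. rewrite Hm. ring. }
  assert (HXY : X * X - D * (Y * Y) = 1).
  { assert (E : (N * X) * (N * X) - D * ((N * Y) * (N * Y)) = N * N).
    { rewrite HNX, HNY. rewrite <- HN1 at 1. rewrite <- HN2. ring. }
    assert (E2 : (N * N) * (X * X - D * (Y * Y) - 1) = 0).
    { replace ((N * N) * (X * X - D * (Y * Y) - 1)) with ((N * X) * (N * X) - D * ((N * Y) * (N * Y)) - N * N) by ring. lia. }
    apply Z.mul_eq_0 in E2. destruct E2 as [E2|E2]; [apply Z.mul_eq_0 in E2; lia|lia]. }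
  assert (HY0 : Y <> 0).
  { intro E. rewrite E in HNY. rewrite Z.mul_0_r in HNY.
    assert (Hx : y1 * (x1 + m * a) = x1 * (y1 + m * b)) by lia.
    assert (E3 : (y1 * y1) * N = ((y1 + m * b) * (y1 + m * b)) * N).
    { rewrite <- HN2 at 1. rewrite <- HN1.
      replace ((y1 * y1) * ((x1 + m * a) * (x1 + m * a) - D * ((y1 + m * b) * (y1 + m * b))))
        with ((y1 * (x1 + m * a)) * (y1 * (x1 + m * a)) - D * (y1 * y1) * ((y1 + m * b) * (y1 + m * b))) by ring.
      rewrite Hx. ring. }
    assert (E4 : (y1 * y1 - (y1 + m * b) * (y1 + m * b)) * N = 0) by lia.
    apply Z.mul_eq_0 in E4. destruct E4 as [E4|E4]; [|lia].
    clear -E4 Hy1 Hy12. nia. }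
  assert (HY1 : 1 <= Y * Y) by (clear -HY0; nia).
  assert (HDY : 0 <= D * (Y * Y)) by (clear -HD; nia).
  assert (HX0 : X <> 0) by (intro E; rewrite E in HXY; lia).
  assert (HX1 : 1 <= X * X) by (clear -HX0; nia).
  exists (X * X + D * (Y * Y)), (Z.abs (2 * X * Y)).
  assert (HQQ : Z.abs (2 * X * Y) * Z.abs (2 * X * Y) = (2 * X * Y) * (2 * X * Y)).
  { destruct (Z_lt_le_dec 0 (2 * X * Y)); [rewrite Z.abs_eq by lia|rewrite Z.abs_neq by lia]; ring. }
  split.
  { rewrite HQQ. replace ((X * X + D * (Y * Y)) * (X * X + D * (Y * Y)) - D * (2 * X * Y * (2 * X * Y)))
      with ((X * X - D * (Y * Y)) * (X * X - D * (Y * Y))) by ring. rewrite HXY. reflexivity. }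
  split; [lia|].
  split.
  { assert (1 <= Z.abs (2 * X * Y)); [|lia].
    rewrite Z.abs_mul. assert (1 <= Z.abs X * Z.abs Y); [|lia].
    assert (A1 : 1 <= Z.abs X) by lia. assert (A2 : 1 <= Z.abs Y) by lia.
    pose proof (Z.mul_le_mono_nonneg 1 (Z.abs X) 1 (Z.abs Y) ltac:(lia) A1 ltac:(lia) A2). lia. }
  split.
  - exists (2 * D * (sg * (y1 * a - x1 * b)) * Y).
    assert (E : X * X + D * (Y * Y) - 1 = 2 * D * (Y * Y)) by lia. rewrite E.
    unfold Y at 2. ring.
  - apply Z.divide_abs_r. exists (2 * X * sg * (y1 * a - x1 * b)). unfold Y. ring.
Qed.

Lemma ns_core m k : m = 2 * k + 1 -> forall n : nat, forall x y,
  (Z.abs_nat y < n)%nat -> y <> 0 -> x * x <> 2 * m * (y * y).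
Proof.
  intros Hm n. induction n as [|n IH]; intros x y Hy Hy0 E; [lia|].
  destruct (Z.Even_or_Odd x) as [[a Ha]|[a Ha]]; subst x.
  - destruct (Z.Even_or_Odd y) as [[b Hb]|[b Hb]]; subst y.
    + apply (IH a b); [lia|lia|]. lia.
    + subst m. nia.
  - subst m. nia.
Qed.

Lemma ns_form m k s : m = 2 * k + 1 -> s <> 0 -> NS (2 * m * (s * s)).
Proof.
  intros Hm Hs x y Hy E.
  apply (ns_core m k Hm (S (Z.abs_nat (s * y))) x (s * y)); [lia| nia |].
  rewrite E. ring.
Qed.

Lemma odd_div2 d X : Z.odd d = true -> (d | 2 * X) -> (d | X).
Proof.
  intros Ho H. apply (Gauss d 2 X H). apply bezout_rel_prime.
  destruct (Z.Even_or_Odd d) as [[k Hk]|[k Hk]]; subst d.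
  - rewrite Z.odd_mul in Ho. simpl in Ho. discriminate.
  - apply (Bezout_intro _ _ _ 1 (- k)). ring.
Qed.

Lemma odd_div32 d X : Z.odd d = true -> (d | 32 * X) -> (d | X).
Proof.
  intros Ho H.
  apply (odd_div2 d X Ho). apply (odd_div2 d _ Ho). apply (odd_div2 d _ Ho).
  apply (odd_div2 d _ Ho). apply (odd_div2 d _ Ho).
  replace (2 * (2 * (2 * (2 * (2 * X))))) with (32 * X) by ring. exact H.
Qed.

Lemma orbit (eps g h K x0 y0 n0 : Z)
  (Hgh : g * h = eps * eps + 16) (Hg : 1 <= g) (Hgodd : Z.odd g = true)
  (Hc : 4 * g < K)
  (Hx0 : Z.odd x0 = true) (Hy0 : Z.odd y0 = true)
  (Hconic : g * ((x0 + y0) * (x0 + y0)) - 2 * eps * (x0 + y0) + h = K * (x0 * y0))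
  (Hn0 : g * (x0 + y0) - eps = 4 * n0) (Hn0odd : Z.odd n0 = true)
  (HW0 : 0 < (K - 4 * g) * (x0 + y0) + 4 * eps) (Hv0 : y0 <= x0)
  (Hns : NS ((K - 4 * g) * K)) :
  forall N, exists n, N < n /\ 0 < n /\ Z.odd n = true /\ good eps n.
Proof.
  intro N.
  set (c := K - 4 * g) in *.
  set (D := c * K) in *.
  assert (Hc0 : 1 <= c) by lia.
  assert (HD : 1 <= D) by (unfold D; timeout 20 nia).
  destruct (pell D (16 * c) HD ltac:(lia) Hns) as [P [Q [HPQ [HP [HQ [[p1 Hp1] [q1 Hq1]]]]]]].
  set (W0 := c * (x0 + y0) + 4 * eps) in *.
  set (v0 := x0 - y0).
  set (it := fix it (j : nat) : Z * Z := match j with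
     | O => (W0, v0)
     | S j' => (P * fst (it j') + D * Q * snd (it j'), Q * fst (it j') + P * snd (it j')) end).
  assert (Inv : forall j, exists a b, fst (it j) = W0 + 16 * c * a /\ snd (it j) = v0 + 16 * c * b /\
     fst (it j) * fst (it j) - D * (snd (it j) * snd (it j)) = W0 * W0 - D * (v0 * v0) /\
     W0 + Z.of_nat j <= fst (it j) /\ 0 <= snd (it j)).
  { induction j as [|j IH].
    - exists 0, 0. simpl. unfold v0. lia.
    - destruct IH as [a [b [Ha [Hb [Hn [Hw Hv]]]]]].
      change (it (S j)) with (P * fst (it j) + D * Q * snd (it j), Q * fst (it j) + P * snd (it j)).
      cbn [fst snd].
      set (W := fst (it j)) in *. set (V := snd (it j)) in *.
      exists (a + p1 * W + D * q1 * V), (b + q1 * W + p1 * V).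
      assert (HPW : P = p1 * (16 * c) + 1) by lia.
      split; [rewrite HPW, Hq1; replace W0 with (W - 16 * c * a) by lia; ring|].
      split; [rewrite HPW, Hq1; replace v0 with (V - 16 * c * b) by lia; ring|].
      split.
      { rewrite <- Hn.
        replace ((P * W + D * Q * V) * (P * W + D * Q * V) - D * ((Q * W + P * V) * (Q * W + P * V)))
          with ((P * P - D * (Q * Q)) * (W * W - D * (V * V))) by ring.
        rewrite HPQ. ring. }
      assert (HWp : 0 < W) by lia.
      assert (H1 : W <= P * W) by (clear -HP HWp; timeout 20 nia).
      assert (H2 : 0 <= D * Q * V) by (clear -HD HQ Hv; timeout 20 nia).
      assert (H3 : 0 <= Q * W) by (clear -HQ HWp; timeout 20 nia).
      assert (H4 : 0 <= P * V) by (clear -HP Hv; timeout 20 nia).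
      rewrite Nat2Z.inj_succ. split; [|lia].
      assert (W + 1 <= P * W) by (clear -HP HWp; timeout 20 nia). lia. }
  set (j := Z.to_nat (c * (4 * Z.abs N + Z.abs eps + 1) + 4 * Z.abs eps + Z.abs W0)).
  destruct (Inv j) as [a [b [Ha [Hb [Hn [Hw Hv]]]]]].
  set (W := fst (it j)) in *. set (V := snd (it j)) in *.
  assert (Hj : Z.of_nat j = c * (4 * Z.abs N + Z.abs eps + 1) + 4 * Z.abs eps + Z.abs W0).
  { unfold j. rewrite Z2Nat.id; [reflexivity|].
    assert (0 <= c * (4 * Z.abs N + Z.abs eps + 1)) by (apply Z.mul_nonneg_nonneg; lia). lia. }
  set (x := x0 + 8 * a + 8 * c * b).
  set (y := y0 + 8 * a - 8 * c * b).
  set (u := x + y).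
  set (n := n0 + 4 * g * a).
  assert (HWu : W = c * u + 4 * eps) by (unfold u, x, y; rewrite Ha; unfold W0; ring).
  assert (HVxy : V = x - y) by (unfold x, y; rewrite Hb; unfold v0; ring).
  assert (Hu : 4 * Z.abs N + Z.abs eps + 1 <= u).
  { assert (c * (4 * Z.abs N + Z.abs eps + 1) <= c * u) by lia.
    apply (Z.mul_le_mono_pos_l _ _ c); lia. }
  assert (H4n : g * u - eps = 4 * n).
  { unfold n, u, x, y. replace (4 * (n0 + 4 * g * a)) with (4 * n0 + 16 * g * a) by ring.
    rewrite <- Hn0. ring. }
  assert (Key : forall xx yy, c * (g * ((xx + yy) * (xx + yy)) - 2 * eps * (xx + yy) + h - K * (xx * yy)) * 4
     = - ((c * (xx + yy) + 4 * eps) * (c * (xx + yy) + 4 * eps) - D * ((xx - yy) * (xx - yy)))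
       + 16 * eps * eps + 4 * h * c).
  { intros xx yy. unfold D, c. ring. }
  assert (Hconic2 : g * (u * u) - 2 * eps * u + h = K * (x * y)).
  { pose proof (Key x y) as K1. pose proof (Key x0 y0) as K0.
    fold u in K1. rewrite <- HWu, <- HVxy in K1. fold W0 v0 in K0.
    rewrite Hn in K1. rewrite <- K0 in K1.
    rewrite Hconic in K1.
    assert (E : c * (g * (u * u) - 2 * eps * u + h - K * (x * y)) = 0) by lia.
    apply Z.mul_eq_0 in E. lia. }
  assert (H16 : 16 * (n * n + 1) = g * (K * (x * y))).
  { rewrite <- Hconic2. assert (E : 16 * (n * n + 1) = (g * u - eps) * (g * u - eps) + 16) by (rewrite H4n; ring).
    rewrite E. replace ((g * u - eps) * (g * u - eps) + 16) with (g * (g * (u * u)) - 2 * eps * g * u + (eps * eps + 16)) by ring.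
    rewrite <- Hgh. ring. }
  assert (Hpos : 0 < g * (u * u) - 2 * eps * u + h).
  { assert (Hq : 0 < g * (g * (u * u) - 2 * eps * u + h)).
    { replace (g * (g * (u * u) - 2 * eps * u + h)) with ((g * u - eps) * (g * u - eps) + (g * h - eps * eps)) by ring.
      rewrite Hgh. pose proof (Z.square_nonneg (g * u - eps)). lia. }
    apply (Z.mul_pos_cancel_l g); [lia|exact Hq]. }
  assert (HK : 0 < K) by lia.
  assert (Hxy : 0 < x /\ 0 < y).
  { rewrite Hconic2 in Hpos. assert (Hxy0 : 0 < x * y) by (apply (Z.mul_pos_cancel_l K); lia).
    unfold u in Hu. assert (Hs : 0 < x + y) by lia. clear -Hxy0 Hs. nia. }
  assert (Hxo : Z.odd x = true).
  { unfold x. replace (x0 + 8 * a + 8 * c * b) with (x0 + 2 * (4 * a + 4 * c * b)) by ring.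
    rewrite Z.odd_add_mul_2. exact Hx0. }
  assert (Hyo : Z.odd y = true).
  { unfold y. replace (y0 + 8 * a - 8 * c * b) with (y0 + 2 * (4 * a - 4 * c * b)) by ring.
    rewrite Z.odd_add_mul_2. exact Hy0. }
  assert (Hno : Z.odd n = true).
  { unfold n. replace (n0 + 4 * g * a) with (n0 + 2 * (2 * g * a)) by ring.
    rewrite Z.odd_add_mul_2. exact Hn0odd. }
  assert (Hgu : u <= g * u) by (clear - Hg Hu; nia).
  exists n. split; [lia|]. split; [lia|]. split; [exact Hno|].
  destruct (Z.Even_or_Odd n) as [[k Hk]|[k Hk]].
  { rewrite Hk, Z.odd_mul in Hno. discriminate. }
  set (M := 2 * k * k + 2 * k + 1).
  assert (HM : (n ^ 2 + 1) / 2 = M).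
  { replace (n ^ 2 + 1) with (M * 2) by (unfold M; rewrite Hk; ring). apply Z.div_mul. lia. }
  assert (H32 : 32 * M = g * (K * (x * y))).
  { rewrite <- H16. unfold M. rewrite Hk. ring. }
  exists (g * x), (g * y).
  destruct Hxy as [Hx Hy].
  split; [apply Z.mul_pos_pos; lia|]. split; [apply Z.mul_pos_pos; lia|].
  rewrite HM.
  split.
  { apply odd_div32; [rewrite Z.odd_mul, Hgodd, Hxo; reflexivity|].
    rewrite H32. exists (K * y). ring. }
  split.
  { apply odd_div32; [rewrite Z.odd_mul, Hgodd, Hyo; reflexivity|].
    rewrite H32. exists (K * x). ring. }
  unfold u in H4n. lia.
Qed.

Lemma odd_form z k : z = 1 + 2 * k -> Z.odd z = true.
Proof. intros ->. rewrite Z.odd_add_mul_2. reflexivity. Qed.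

Theorem theorem2 (eps : Z) (Heps : eps mod 4 = 2) :
  forall N : Z, exists n : Z, N < n /\ 0 < n /\ Z.odd n = true /\ good eps n.
Proof.
  pose proof (Z.div_mod eps 4 ltac:(lia)) as Hd. rewrite Heps in Hd.
  set (q := eps / 4) in Hd.
  destruct (Z.Even_or_Odd q) as [[t Ht]|[t Ht]].
  -
    assert (He : eps = 8 * t + 2) by lia. clear Hd Ht. subst eps.
    set (m := (8*t^4+4*t^2+1)*(64*t^4+16*t^2-8*t+3)).
    apply (orbit (8*t+2) (16*t^2+8*t+5) 4 (32*(8*t^4+4*t^2+1)) (16*t^2-8*t+5) 1 (64*t^4+28*t^2+7)).
    + ring.
    + timeout 30 nia.
    + apply (odd_form _ (8*t^2+4*t+2)). ring.
    + timeout 30 nia.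
    + apply (odd_form _ (8*t^2-4*t+2)). ring.
    + reflexivity.
    + ring.
    + ring.
    + apply (odd_form _ (32*t^4+14*t^2+3)). ring.
    + timeout 30 nia.
    + timeout 30 nia.
    + replace ((32 * (8 * t ^ 4 + 4 * t ^ 2 + 1) - 4 * (16 * t ^ 2 + 8 * t + 5)) * (32 * (8 * t ^ 4 + 4 * t ^ 2 + 1)))
        with (2 * m * (8 * 8)) by (unfold m; ring).
      apply (ns_form m (2*(4*t^4+2*t^2)*(32*t^4+8*t^2-4*t+1) + (4*t^4+2*t^2) + (32*t^4+8*t^2-4*t+1))); [unfold m; ring|lia].
  -
    assert (He : eps = 8 * t + 6) by lia. clear Hd Ht. subst eps.
    set (m := (2*t^2+2*t+1)*(16*t^2+16*t+7)).
    apply (orbit (8*t+6) 1 ((8*t+6)*(8*t+6)+16) (32*(2*t^2+2*t+1)) (64*t^2+80*t+41) 1 (16*t^2+18*t+9)).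
    + ring.
    + lia.
    + reflexivity.
    + timeout 30 nia.
    + apply (odd_form _ (32*t^2+40*t+20)). ring.
    + reflexivity.
    + ring.
    + ring.
    + apply (odd_form _ (8*t^2+9*t+4)). ring.
    + assert (Hc1 : 12 <= 32 * (2 * t ^ 2 + 2 * t + 1) - 4 * 1) by nia.
      assert (Hu1 : 0 < 64 * t ^ 2 + 80 * t + 41 + 1) by nia.
      assert (12 * (64 * t ^ 2 + 80 * t + 41 + 1) <= (32 * (2 * t ^ 2 + 2 * t + 1) - 4 * 1) * (64 * t ^ 2 + 80 * t + 41 + 1))
        by (apply Z.mul_le_mono_nonneg_r; lia).
      nia.
    + assert (64*t^2+80*t+41 = (8*t+5)*(8*t+5)+16) by ring. pose proof (Z.square_nonneg (8*t+5)). lia.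
    + replace ((32 * (2 * t ^ 2 + 2 * t + 1) - 4 * 1) * (32 * (2 * t ^ 2 + 2 * t + 1)))
        with (2 * m * (8 * 8)) by (unfold m; ring).
      apply (ns_form m (2*(t^2+t)*(8*t^2+8*t+3) + (t^2+t) + (8*t^2+8*t+3))); [unfold m; ring|lia].
Qed.
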